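(* Let $r \geq 2$ and $n \geq 1$ be integers, and let $\Gamma$ be an unbalanced signed graph on $n$ vertices that is $\mathcal{K}^-_{r+1}$-free, i.e., $\Gamma$ contains no unbalanced signed complete graph on $r+1$ vertices as a (signed) subgraph. Then the number of edges of $\Gamma$ satisfies $$e(\Gamma) \leq \frac{n(n-1)}{2} - (n - r).$$
   Context: A signed graph $\Gamma=(G,\sigma)$ is a simple graph $G$ (the underlying graph) together with a sign function $\sigma: E(G)\to\{-1,+1\}$. A cycle is positive if it contains an even number of negative edges and negative otherwise; $\Gamma$ is balanced if all its cycles are positive and unbalanced otherwise. $\mathcal{K}^-_{k}$ denotes the set of unbalanced signed complete graphs on $k$ vertices (signed graphs whose underlying graph is $K_k$ and which are unbalanced), and $\Gamma$ is $\mathcal{K}^-_{k}$-free if no subgraph of $\Gamma$, with the inherited signs, belongs to $\mathcal{K}^-_{k}$. $e(\Gamma)$ denotes the number of edges of $\Gamma$. *)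

(* Defs.v *)
From mathcomp Require Import all_boot all_order all_algebra.
Set Implicit Arguments. Unset Strict Implicit. Unset Printing Implicit Defensive.

(* A signed graph on vertex type 'I_n: a symmetric irreflexive adjacency
   relation [adj] (the simple underlying graph) and a symmetric relation [neg]
   telling which edges carry sign -1 (its values on non-edges are irrelevant). *)
Definition signed_graph (n : nat) (adj neg : rel 'I_n) : Prop :=
  symmetric adj /\ irreflexive adj /\ symmetric neg.

Definition neg_count (n : nat) (neg : rel 'I_n) (c : seq 'I_n) : nat :=
  count (fun e => neg e.1 e.2) (zip c (rot 1 c)).

Definition is_cycle_in (n : nat) (adj : rel 'I_n) (S : {set 'I_n})
  (c : seq 'I_n) : Prop :=
  [/\ uniq c, 3 <= size c, {subset c <= S} & cycle adj c].

Definition balanced_on (n : nat) (adj neg : rel 'I_n) (S : {set 'I_n}) : Prop :=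
  forall c, is_cycle_in adj S c -> ~~ odd (neg_count neg c).

Definition balanced (n : nat) (adj neg : rel 'I_n) : Prop :=
  balanced_on adj neg setT.

Definition Kminus_free (n : nat) (adj neg : rel 'I_n) (k : nat) : Prop :=
  forall S : {set 'I_n}, #|S| = k ->
    {in S &, forall x y, x != y -> adj x y} -> balanced_on adj neg S.

Definition num_edges (n : nat) (adj : rel 'I_n) : nat :=
  #|[set p : 'I_n * 'I_n | (p.1 < p.2)%N && adj p.1 p.2]|.

(* Main.v *)
Require Import Defs.
From mathcomp Require Import all_boot all_order all_algebra zify.
From Stdlib Require Import Classical.
Import GRing.Theory Num.Theory.
Set Implicit Arguments. Unset Strict Implicit. Unset Printing Implicit Defensive.

Fixpoint nw (n : nat) (neg : rel 'I_n) (a : 'I_n) (s : seq 'I_n) : nat :=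
  if s is b :: t then neg a b + nw neg b t else 0.

Lemma count_zip_rcons n (neg : rel 'I_n) x p y :
  count (fun e => neg e.1 e.2) (zip (x :: p) (rcons p y)) = nw neg x (rcons p y).
Proof. by elim: p x => [|z p IH] x //=; rewrite IH. Qed.

Lemma neg_count_cons n (neg : rel 'I_n) x p :
  neg_count neg (x :: p) = nw neg x (rcons p x).
Proof. by rewrite /neg_count rot1_cons count_zip_rcons. Qed.

Lemma nw_cat n (neg : rel 'I_n) x s t :
  nw neg x (s ++ t) = nw neg x s + nw neg (last x s) t.
Proof. by elim: s x => //= b s IH x; rewrite IH addnA. Qed.

Lemma nw_rcons n (neg : rel 'I_n) x s y :
  nw neg x (rcons s y) = nw neg x s + neg (last x s) y.
Proof. by rewrite -cats1 nw_cat /= addn0. Qed.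

Lemma odd_contra2 a b c m : a + b = c + m + m -> ~~ odd a -> ~~ odd b -> odd c -> False.
Proof.
move=> E ea eb oc; have := congr1 odd E.
by rewrite !oddD (negbTE ea) (negbTE eb) oc; case: (odd m).
Qed.

Lemma odd_contra4 a b d e c m : a + b + d + e = c + m + m ->
  ~~ odd a -> ~~ odd b -> ~~ odd d -> ~~ odd e -> odd c -> False.
Proof.
move=> E ea eb ed ee oc; have := congr1 odd E.
by rewrite !oddD (negbTE ea) (negbTE eb) (negbTE ed) (negbTE ee) oc; case: (odd m).
Qed.

Lemma shortest n (P : seq 'I_n -> Prop) c0 : P c0 ->
  exists c, P c /\ forall c', P c' -> size c <= size c'.
Proof.
suff H : forall k c0, size c0 < k -> P c0 -> exists c, P c /\ forall c', P c' -> size c <= size c'.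
  by move=> Pc0; exact: (H (size c0).+1 c0).
elim=> [//|k IH] c1 hs Pc1.
case: (classic (exists c', P c' /\ size c' < size c1)) => [[c' [Pc' lt]]|nex].
  by apply: (IH c') => //; apply: leq_trans lt hs.
exists c1; split=> // c' Pc'; rewrite leqNgt; apply/negP => lt; apply: nex; by exists c'.
Qed.

Lemma card_lt_pairs n : #|[set q : 'I_n * 'I_n | q.1 < q.2]| = (n * (n-1)) %/ 2.
Proof.
set P := [set q : 'I_n * 'I_n | q.1 < q.2].
set P' := [set q : 'I_n * 'I_n | q.2 < q.1].
set Dg := [set q : 'I_n * 'I_n | q.1 == q.2].
have e1 : #|P'| = #|P|.
  have -> : P' = (fun q : 'I_n * 'I_n => (q.2, q.1)) @: P.
    apply/setP => -[a b]; rewrite !inE /=; apply/idP/imsetP => [lt|[[c d]]].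
      by exists (b, a); rewrite ?inE.
    by rewrite inE /= => lt [-> ->].
  by apply: card_in_imset => -[a b] [c d] _ _ [-> ->].
have e2 : #|Dg| = n.
  have -> : Dg = (fun i : 'I_n => (i, i)) @: setT.
    apply/setP => -[a b]; rewrite !inE /=; apply/idP/imsetP => [/eqP ->|[c _ [-> ->]]] //.
    by exists b.
  by rewrite card_in_imset ?cardsT ?card_ord // => a b _ _ [].
have e3 := cardsID P setT.
have e4 := cardsID P' (setT :\: P).
have e5 : setT :&: P = P by rewrite setTI.
have e6 : (setT :\: P) :&: P' = P'.
  by apply/setP => -[a b]; rewrite /P /P' !inE /=; case: ltngtP.
have e7 : (setT :\: P) :\: P' = Dg.
  by apply/setP => -[a b]; rewrite /P /P' /Dg !inE /= -val_eqE /=; case: ltngtP.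
rewrite e5 cardsT card_prod card_ord in e3.
rewrite e6 e7 e1 e2 in e4.
have : n * (n - 1) = #|P| * 2 by rewrite mulnBr muln1 -e3 -e4; lia.
by move=> ->; rewrite mulnK.
Qed.

Lemma count_lemma n (adj : rel 'I_n) (D : {set 'I_n}) (p : 'I_n -> 'I_n) :
  symmetric adj ->
  (forall v, v \in D -> (p v != v) && ~~ adj v (p v)) ->
  (forall v w, v \in D -> w \in D -> p v = w -> p w = v -> False) ->
  num_edges adj + #|D| <= (n * (n-1)) %/ 2.
Proof.
move=> sa Hp H2.
set P := [set q : 'I_n * 'I_n | q.1 < q.2].
set A := [set q : 'I_n * 'I_n | adj q.1 q.2].
have -> : num_edges adj = #|P :&: A|.
  by rewrite /num_edges; apply: eq_card => q; rewrite !inE.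
rewrite -card_lt_pairs -/P -(cardsID A P) leq_add2l.
pose f := fun v : 'I_n => if v < p v then (v, p v) else (p v, v).
have <- : #|f @: D| = #|D|.
  apply: card_in_imset => v w vD wD.
  have /andP[nv _] := Hp v vD; have /andP[nw _] := Hp w wD.
  rewrite /f; case: ifP => _; case: ifP => _ [e1 e2].
  - by [].
  - by exfalso; apply: (H2 v w vD wD) => //; rewrite e2 e1.
  - by exfalso; apply: (H2 v w vD wD) => //; rewrite -e1 e2.
  - by apply: val_inj; rewrite /= e2.
apply: subset_leq_card; apply/subsetP => q /imsetP[v vD ->].
have /andP[nv na] := Hp v vD.
rewrite /f /P /A; case: ifP => h; rewrite !inE /= ?h //.
  by rewrite na.
rewrite sa na /= ltn_neqAle leqNgt h andbT.
by move: nv; rewrite -val_eqE eq_sym.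
Qed.

Definition cyc n (adj : rel 'I_n) (c : seq 'I_n) := [&& uniq c, 3 <= size c & cycle adj c].

Lemma ar5 a b c d e : a + c + e + (b + d + e) = a + (c + (b + d)) + e + e.
Proof. lia. Qed.

Lemma chord1 n (adj neg : rel 'I_n) x s1 y s2 :
  symmetric adj -> symmetric neg ->
  cyc adj (x :: s1 ++ y :: s2) -> odd (neg_count neg (x :: s1 ++ y :: s2)) ->
  (forall c', cyc adj c' -> size c' < size (x :: s1 ++ y :: s2) -> ~~ odd (neg_count neg c')) ->
  s1 != [::] -> s2 != [::] -> ~~ adj x y.
Proof.
move=> sa sn /and3P[u _ cy] oc Hm ne1 ne2; apply/negP => axy.
have l1 : 0 < size s1 by case: (s1) ne1.
have l2 : 0 < size s2 by case: (s2) ne2.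
have u2 := u; rewrite -(rot_uniq 1) rot1_cons rcons_cat cat_uniq in u2.
case/and3P: u2 => _ _ uC2.
have uC1 : uniq (x :: rcons s1 y).
  by move: u; rewrite -cat_rcons -cat_cons cat_uniq => /and3P[].
move: cy; rewrite /= rcons_cat cat_path /= => /and3P[p1 a1 p2].
have cC1 : cycle adj (x :: rcons s1 y).
  by rewrite /= !rcons_path last_rcons p1 a1 /= sa axy.
have cC2 : cycle adj (y :: rcons s2 x).
  by rewrite /= rcons_path p2 last_rcons axy.
have e1 := Hm (x :: rcons s1 y).
have e2 := Hm (y :: rcons s2 x).
rewrite /cyc uC1 cC1 uC2 cC2 /= !size_rcons !size_cat /= in e1 e2.
have {}e1 := e1 ltac:(by rewrite andbT) ltac:(rewrite addnS !ltnS -addn1 leq_add2l; done).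
have {}e2 := e2 ltac:(by rewrite andbT) ltac:(rewrite addnS !ltnS addnC -addn1 leq_add2l; done).

rewrite !neg_count_cons in oc e1 e2.
rewrite rcons_cat nw_cat /= nw_rcons in oc.
rewrite !nw_rcons last_rcons in e1.
rewrite !nw_rcons last_rcons in e2.
apply: (odd_contra2 (m := neg x y) _ e1 e2 oc).
by rewrite (sn y x) ar5.
Qed.

Lemma ar_c2 a m b w l : a + (m + (b + 0)) + (w + l + m) = a + (w + l + b) + m + m.
Proof. lia. Qed.

Lemma ar_w p0 p1 p2 p3 a01 a12 a23 w l :
  (p0 + (a01 + (p1 + 0))) + (p1 + (a12 + (p2 + 0))) + (p2 + (a23 + (p3+0))) + (p3 + (w + l + p0)) =
  a01 + (a12 + (a23 + (w + l))) + (p0+p1+p2+p3) + (p0+p1+p2+p3).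
Proof. lia. Qed.

Lemma chord2 n (adj neg : rel 'I_n) x0 x1 s y :
  symmetric adj -> symmetric neg ->
  cyc adj (x0 :: x1 :: rcons s y) -> odd (neg_count neg (x0 :: x1 :: rcons s y)) ->
  (forall c', cyc adj c' -> size c' < size (x0 :: x1 :: rcons s y) -> ~~ odd (neg_count neg c')) ->
  s != [::] -> ~~ adj x1 y.
Proof.
move=> sa sn /and3P[u _ cy] oc Hm ne; apply/negP => axy.
have l1 : 0 < size s by case: (s) ne.
case/andP: u => nx0 uQ0.
have uQ : uniq (x1 :: rcons s y) := uQ0.
have uT : uniq [:: x0; x1; y].
  have [d01 d0y] : (x0 != x1) /\ (x0 != y).
    by move: nx0; rewrite inE mem_rcons !inE !negb_or => /and3P[-> -> _].
  have d1y : x1 != y.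
    by move: uQ; rewrite /= mem_rcons !inE !negb_or => /andP[/andP[-> _] _].
  by rewrite /= !inE !negb_or d01 d0y d1y.
move: cy; rewrite /= !rcons_path last_rcons => /and3P[a01 /andP[p1 a1] ay0].
have cT : cycle adj [:: x0; x1; y] by rewrite /= a01 axy ay0.
have cQ : cycle adj (x1 :: rcons s y) by rewrite /= !rcons_path p1 a1 last_rcons sa axy.
have e1 := Hm [:: x0; x1; y].
have e2 := Hm (x1 :: rcons s y).
rewrite /cyc uT cT uQ cQ /= !size_rcons in e1 e2.
have {}e1 := e1 isT ltac:(by rewrite !ltnS).
have {}e2 := e2 ltac:(by rewrite andbT) ltac:(by []).
rewrite !neg_count_cons in oc e1 e2.
rewrite /= !nw_rcons last_rcons in oc.
rewrite /= !nw_rcons last_rcons in e2.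
rewrite /= in e1.
apply: (odd_contra2 (m := neg x1 y) _ e1 e2 oc).
by rewrite (sn y x1) ar_c2.
Qed.

Lemma wheel n (adj neg : rel 'I_n) x0 x1 x2 x3 s v :
  symmetric adj -> symmetric neg ->
  cyc adj (x0 :: x1 :: x2 :: x3 :: s) -> odd (neg_count neg (x0 :: x1 :: x2 :: x3 :: s)) ->
  (forall c', cyc adj c' -> size c' < size (x0 :: x1 :: x2 :: x3 :: s) -> ~~ odd (neg_count neg c')) ->
  v \notin (x0 :: x1 :: x2 :: x3 :: s) ->
  adj v x0 -> adj v x1 -> adj v x2 -> adj v x3 -> False.
Proof.
move=> sa sn /and3P[u _ cy] oc Hm nv a0 a1 a2 a3.
move: nv; rewrite !inE !negb_or => /and5P[n0 n1 n2 n3 ns].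
move: u => /= /and5P[]; rewrite !inE !negb_or.
move=> /and4P[d01 d02 d03 n0s] /and3P[d12 d13 n1s] /andP[d23 n2s] n3s us.
move: cy; rewrite /= rcons_path => /and4P[b01 b12 b23 /andP[ps bl]].
have c1 : cyc adj [:: v; x0; x1].
  by rewrite /cyc /= !inE !negb_or n0 n1 d01 a0 b01 (sa x1) a1.
have c2 : cyc adj [:: v; x1; x2].
  by rewrite /cyc /= !inE !negb_or n1 n2 d12 a1 b12 (sa x2) a2.
have c3 : cyc adj [:: v; x2; x3].
  by rewrite /cyc /= !inE !negb_or n2 n3 d23 a2 b23 (sa x3) a3.
have c4 : cyc adj (v :: x3 :: rcons s x0).
  rewrite /cyc /= !inE !mem_rcons !inE !negb_or n3 n0 ns rcons_uniq n0s us size_rcons.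
  rewrite (negbTE n3s) eq_sym d03 /= !rcons_path ps last_rcons bl a3 (sa x0) a0.
  by rewrite !andbT.
have e1 := Hm _ c1 isT.
have e2 := Hm _ c2 isT.
have e3 := Hm _ c3 isT.
have e4 := Hm _ c4 ltac:(by rewrite /= size_rcons).
rewrite !neg_count_cons /= in oc e1 e2 e3 e4.
rewrite !nw_rcons last_rcons in e4.
rewrite !nw_rcons in oc.
apply: (odd_contra4 (m := neg v x0 + neg v x1 + neg v x2 + neg v x3) _ e1 e2 e3 e4 oc).
by rewrite (sn x1 v) (sn x2 v) (sn x3 v) (sn x0 v) ar_w.
Qed.

Lemma tri_case (r n : nat) (adj neg : rel 'I_n) x0 x1 x2 :
  (2 <= r)%N -> symmetric adj -> Kminus_free adj neg r.+1 ->
  cyc adj [:: x0; x1; x2] -> odd (neg_count neg [:: x0; x1; x2]) ->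
  exists (D : {set 'I_n}) (p : 'I_n -> 'I_n), (forall v, v \in D -> (p v != v) && ~~ adj v (p v)) /\
    (forall v w, v \in D -> w \in D -> p v = w -> p w = v -> False) /\ n <= #|D| + r.
Proof.
move=> r2 sa kf cc oc.
set c := [:: x0; x1; x2].
have /and3P[uc sc cy] := cc.
have /and4P[a01 a12 a20 _] : [&& adj x0 x1, adj x1 x2, adj x2 x0 & true] := cy.
set T := [set x in c].
pose clique (Q : {set 'I_n}) := [forall x in Q, forall y in Q, (x != y) ==> adj x y].
pose Pq (Q : {set 'I_n}) := [&& T \subset Q, clique Q & #|Q| <= r.+1].
have PT : Pq T.
  rewrite /Pq subxx /= cardsE (card_uniqP uc) /= ltnS (leq_trans r2) // andbT.
  apply/forallP => x; apply/implyP => xT; apply/forallP => y; apply/implyP => yT.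
  apply/implyP => nxy.
  move: nxy xT yT; rewrite !inE => nxy /or3P[]/eqP ex /or3P[]/eqP ey; subst x y;
    rewrite ?eqxx // in nxy; by rewrite ?a01 ?a12 ?a20 // sa ?a01 ?a12 ?a20.
case: (@arg_maxnP _ T Pq (fun Q => #|Q|) PT) => Q PQ Qmax.
case/and3P: PQ => TQ clQ szQ.
have clQ' : {in Q &, forall x y, x != y -> adj x y}.
  move=> x y xQ yQ nxy; move/forallP: clQ => /(_ x); rewrite xQ /=.
  by move/forallP => /(_ y); rewrite yQ nxy.
have szQr : #|Q| <= r.
  rewrite -ltnS ltn_neqAle szQ andbT; apply/negP => /eqP e.
  suff : ~~ odd (neg_count neg c) by rewrite oc.
  apply: (kf Q e clQ' c); split=> //; move=> x xc; apply: (subsetP TQ); by rewrite inE.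
have ex : forall v, v \notin Q -> exists2 u, u \in Q & ~~ adj v u.
  move=> v vQ; apply: NNPP => H.
  have allA : forall u, u \in Q -> adj v u.
    move=> u uQ; case: (boolP (adj v u)) => // na; exfalso; apply: H; by exists u.
  have : Pq (v |: Q).
    rewrite /Pq (subset_trans TQ (subsetU1 _ _)) cardsU1 vQ /= add1n ltnS szQr andbT.
    apply/forallP => x; apply/implyP; rewrite in_setU1 => /orP[/eqP->|xQ];
      apply/forallP => y; apply/implyP; rewrite in_setU1 => /orP[/eqP->|yQ];
      apply/implyP => nxy.
    - by rewrite eqxx in nxy.
    - exact: allA.
    - by rewrite sa; apply: allA.
    - exact: clQ'.
  by move/Qmax => /=; rewrite cardsU1 vQ add1n ltnn.
pose p v := odflt v [pick u in Q | ~~ adj v u].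
have pP : forall v, v \notin Q -> (p v \in Q) && ~~ adj v (p v).
  move=> v vQ; rewrite /p; case: pickP => [u /andP[-> ->] //|none].
  by case: (ex v vQ) => u uQ nu; have := none u; rewrite uQ nu.
exists (~: Q), p; split; [|split].
- move=> v; rewrite in_setC => vQ; have /andP[pQ ->] := pP v vQ.
  by rewrite andbT; apply/eqP => e; rewrite e (negbTE vQ) in pQ.
- move=> v w; rewrite !in_setC => vQ wQ e _.
  by have /andP[pQ _] := pP v vQ; rewrite e (negbTE wQ) in pQ.
- have e := cardsC Q; rewrite card_ord in e.
  apply: (@leq_trans (#|Q| + #|~: Q|)); first by rewrite e.
  by rewrite addnC leq_add2l.
Qed.

Lemma long_case (r n : nat) (adj neg : rel 'I_n) x0 x1 x2 x3 s :
  (2 <= r)%N -> symmetric adj -> symmetric neg ->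
  cyc adj (x0 :: x1 :: x2 :: x3 :: s) -> odd (neg_count neg (x0 :: x1 :: x2 :: x3 :: s)) ->
  (forall c', cyc adj c' -> size c' < size (x0 :: x1 :: x2 :: x3 :: s) -> ~~ odd (neg_count neg c')) ->
  exists (D : {set 'I_n}) (p : 'I_n -> 'I_n), (forall v, v \in D -> (p v != v) && ~~ adj v (p v)) /\
    (forall v w, v \in D -> w \in D -> p v = w -> p w = v -> False) /\ n <= #|D| + r.
Proof.
move=> r2 sa sn cc oc Hm.
set t := x2 :: x3 :: s.
set c := x0 :: x1 :: t.
have /and3P[uc _ cy] := cc.
have [d01 n0t] : x0 != x1 /\ x0 \notin t.
  by move: uc; rewrite /c /= inE negb_or => /andP[/andP[-> ->]].
have n1t : x1 \notin t by move: uc; rewrite /c /= => /and3P[_ ->].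
have ex : forall v, v \notin c -> exists2 u, u \in c & ~~ adj v u.
  move=> v vc; apply: NNPP => H.
  have allA : forall u, u \in c -> adj v u.
    move=> u uc'; case: (boolP (adj v u)) => // na; exfalso; apply: H; by exists u.
  apply: (wheel sa sn cc oc Hm vc); apply: allA; by rewrite !inE eqxx ?orbT.
pose p v := if v \in c then (if v == last x1 t then x1 else x0)
            else odflt v [pick u | (u \in c) && ~~ adj v u].
have pc : forall v, v \notin c -> (p v \in c) && ~~ adj v (p v).
  move=> v vc; rewrite /p (negbTE vc); case: pickP => [u /andP[-> ->] //|none].
  by case: (ex v vc) => u uc' nu; have := none u; rewrite uc' nu.
have p01 : forall v, v \in c -> (p v == x0) || (p v == x1).
  by move=> v vc; rewrite /p vc; case: ifP => _; rewrite eqxx ?orbT.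
have pin : forall v, v != x0 -> v != x1 -> v \in c -> (p v != v) && ~~ adj v (p v).
  move=> v v0 v1 vc.
  have vt : v \in t by move: vc; rewrite /c !inE (negbTE v0) (negbTE v1).
  rewrite /p vc; case: ifP => [/eqP vl|vl].
    rewrite eq_sym v1 /= sa.
    have Ec : c = x0 :: x1 :: rcons (x2 :: belast x3 s) (last x3 s).
      by rewrite /c /t /= -lastI.
    move: cc oc Hm; rewrite -/t -/c Ec => cc' oc' Hm'.
    rewrite vl /t /=.
    by apply: (chord2 sa sn cc' oc' Hm').
  rewrite eq_sym v0 /= sa.
  case/splitPr E: t / vt vl => [t1 t2] vl.
  have Ec : c = x0 :: (x1 :: t1) ++ v :: t2 by rewrite /c E.
  move: cc oc Hm; rewrite -/t -/c Ec => cc' oc' Hm'.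
  apply: (chord1 sa sn cc' oc' Hm') => //.
  by case: (t2) vl => // ; rewrite last_cat /= eqxx.
have pcD : forall v, v != x0 -> v != x1 -> p v \in c.
  move=> v v0 v1; case: (boolP (v \in c)) => vc; last by case/andP: (pc v vc).
  by case/orP: (p01 v vc) => /eqP ->; rewrite !inE eqxx ?orbT.
exists (~: [set x0; x1]), p; split; [|split].
- move=> v; rewrite !inE negb_or => /andP[v0 v1].
  case: (boolP (v \in c)) => vc; first exact: pin.
  have /andP[pv ->] := pc v vc; rewrite andbT.
  by apply/eqP => e; rewrite e (negbTE vc) in pv.
- move=> v w; rewrite !inE !negb_or => /andP[v0 v1] /andP[w0 w1] e1 e2.
  have wc : w \in c by rewrite -e1; apply: pcD.
  by case/orP: (p01 w wc); rewrite e2 ?(negbTE v0) ?(negbTE v1).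
- have e := cardsC [set x0; x1]; rewrite card_ord cards2 d01 in e.
  apply: (@leq_trans (2 + #|~: [set x0; x1]|)); first by rewrite e.
  by rewrite addnC leq_add2l.
Qed.

Unset Implicit Arguments.
Local Open Scope ring_scope.

Lemma final_arith (e d M n r : nat) : (e + d <= M)%N -> (n <= d + r)%N -> e%:Z <= M%:Z - (n%:Z - r%:Z).
Proof. move=> h1 h2. lia. Qed.



Theorem theorem1p7 (r n : nat) (adj neg : rel 'I_n) :
  (2 <= r)%N -> (1 <= n)%N ->
  signed_graph adj neg ->
  ~ balanced adj neg ->
  Kminus_free adj neg r.+1 ->
  (num_edges adj)%:Z <= ((n * (n - 1))%N %/ 2)%:Z - (n%:Z - r%:Z).
Proof.
move=> r2 n1 [sa [ia sn]] nb kf.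
have [c0 Pc0] : exists c, cyc adj c && odd (neg_count neg c).
  apply: NNPP => H; apply: nb => c [uc sc _ cc]; apply/negP => oc; apply: H.
  by exists c; rewrite /cyc uc sc cc oc.
have [c [/andP[cc oc] Hmin]] := @shortest n (fun c => is_true (cyc adj c && odd (neg_count neg c))) c0 Pc0.
have Hm : forall c', cyc adj c' -> (size c' < size c)%N -> ~~ odd (neg_count neg c').
  move=> c' cc' lt; apply/negP => o'.
  by have := Hmin c' ltac:(by rewrite cc' o'); rewrite leqNgt lt.
suff [D [p [Hp [H2 HD]]]] : exists (D : {set 'I_n}) (p : 'I_n -> 'I_n),
    (forall v, v \in D -> (p v != v) && ~~ adj v (p v)) /\
    (forall v w, v \in D -> w \in D -> p v = w -> p w = v -> False) /\ (n <= #|D| + r)%N.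
  exact: final_arith (count_lemma sa Hp H2) HD.
have sc : (3 <= size c)%N by case/and3P: cc.
move: cc oc Hm sc; case: c {Hmin} => [|x0 [|x1 [|x2 [|x3 s]]]] // cc oc Hm _.
  exact: tri_case r2 sa kf cc oc.
exact: long_case r2 sa sn cc oc Hm.
Qed.
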